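(* Let $\mathcal{X},\mathcal{Y}$ be finite, $m\ge1$, $Q$ a distribution on $\mathcal{X}$ with $Q(x)>0$ for all $x$, and $\mathbf x\in\mathcal{X}^m,\mathbf y\in\mathcal{Y}^m$. With $\tilde W(y|x)=\hat P_{\mathbf x,\mathbf y}(x,y)/Q(x)$, $$\tilde I(Q,\tilde W)=\frac1m\log_2\frac{\hat p(\mathbf x|\mathbf y)}{Q(\mathbf x)}.$$ Moreover, for every real $T$ and every $\mathbf y\in\mathcal{Y}^m$, if $\mathbf X=(X_1,\dots,X_m)$ is i.i.d. with law $Q$, then $$\Pr\left(\frac{\hat p(\mathbf X|\mathbf y)}{Q(\mathbf X)}\ge2^{mT}\right)\le2^{-(mT-k_0\log_2m-k_1)},\qquad k_0=k_1=(|\mathcal{X}|-1)|\mathcal{Y}|.$$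
   Context: $\hat P_{\mathbf x,\mathbf y}(x,y)=\frac1m\sum_{i=1}^m\mathbf 1(x_i=x,y_i=y)$ is the joint empirical distribution, $\hat P_{\mathbf y}(y)$ the empirical distribution of $\mathbf y$, and $\hat P_{\mathbf x|\mathbf y}(x|y)=\hat P_{\mathbf x,\mathbf y}(x,y)/\hat P_{\mathbf y}(y)$. The conditional empirical probability is $\hat p(\mathbf x|\mathbf y)=\prod_{i=1}^m\hat P_{\mathbf x|\mathbf y}(x_i|y_i)$, and $Q(\mathbf x)=\prod_{i=1}^mQ(x_i)$. The false mutual information of a non-negative function $\tilde W(y|x)$ is $\tilde I(Q,\tilde W)=\sum_{x,y}Q(x)\tilde W(y|x)\log_2\frac{\tilde W(y|x)}{\sum_{x'}Q(x')\tilde W(y|x')}$ with $0\log0=0$. *)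

(* Defs.v *)
From mathcomp Require Import all_boot.
From Stdlib Require Import Reals.
Set Implicit Arguments. Unset Strict Implicit. Unset Printing Implicit Defensive.
Open Scope R_scope.

Definition log2 (x : R) : R := ln x / ln 2.

Section Defs.
Variables (X Y : finType) (m : nat).

Definition Pxy (xs : {ffun 'I_m -> X}) (ys : {ffun 'I_m -> Y}) (x : X) (y : Y) : R :=
  INR #|[set i : 'I_m | (xs i == x) && (ys i == y)]| / INR m.

Definition Py (ys : {ffun 'I_m -> Y}) (y : Y) : R :=
  INR #|[set i : 'I_m | ys i == y]| / INR m.

Definition Px_given_y (xs : {ffun 'I_m -> X}) (ys : {ffun 'I_m -> Y}) (x : X) (y : Y) : R :=
  Pxy xs ys x y / Py ys y.

Definition phat (xs : {ffun 'I_m -> X}) (ys : {ffun 'I_m -> Y}) : R :=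
  \big[Rmult/1]_(i < m) Px_given_y xs ys (xs i) (ys i).

Definition Qprod (Q : X -> R) (xs : {ffun 'I_m -> X}) : R :=
  \big[Rmult/1]_(i < m) Q (xs i).

Definition PrQ (Q : X -> R) (P : {ffun 'I_m -> X} -> Prop)
    (Pdec : forall xs, {P xs} + {~ P xs}) : R :=
  \big[Rplus/0]_(xs : {ffun 'I_m -> X}) (if Pdec xs then Qprod Q xs else 0).

End Defs.
Arguments PrQ {X m} Q P Pdec.

Definition falseMI (X Y : finType) (Q : X -> R) (W : Y -> X -> R) : R :=
  \big[Rplus/0]_(x : X) \big[Rplus/0]_(y : Y)
    (if Req_EM_T (Q x * W y x) 0 then 0
     else Q x * W y x *
          log2 (W y x / \big[Rplus/0]_(x' : X) (Q x' * W y x'))).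

(* Main.v *)
From HB Require Import structures.
Require Import Defs.
From mathcomp Require Import all_boot.
From Stdlib Require Import Reals Lra.
Open Scope R_scope.
Set Implicit Arguments. Unset Strict Implicit.

Lemma RplusA : associative Rplus. Proof. move=>*; ring. Qed.
Lemma RmultA : associative Rmult. Proof. move=>*; ring. Qed.
HB.instance Definition _ := Monoid.isComLaw.Build R 0 Rplus RplusA Rplus_comm Rplus_0_l.
HB.instance Definition _ := Monoid.isComLaw.Build R 1 Rmult RmultA Rmult_comm Rmult_1_l.
HB.instance Definition _ := Monoid.isMulLaw.Build R 0 Rmult Rmult_0_l Rmult_0_r.
HB.instance Definition _ := Monoid.isAddLaw.Build R Rmult Rplus Rmult_plus_distr_r Rmult_plus_distr_l.

Lemma Rsum_le (I : Type) (r : seq I) (P : pred I) (F G : I -> R) :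
  (forall i, P i -> F i <= G i) ->
  \big[Rplus/0]_(i <- r | P i) F i <= \big[Rplus/0]_(i <- r | P i) G i.
Proof. move=> H; apply: (big_ind2 (fun a b => a <= b)) => //; [lra| move=> *; lra]. Qed.

Lemma Rsum_ge0 (I : Type) (r : seq I) (P : pred I) (F : I -> R) :
  (forall i, P i -> 0 <= F i) -> 0 <= \big[Rplus/0]_(i <- r | P i) F i.
Proof. move=> H; apply: (big_ind (fun a => 0 <= a)) => //; [lra| move=> *; lra]. Qed.

Lemma Rprod_ge0 (I : Type) (r : seq I) (P : pred I) (F : I -> R) :
  (forall i, P i -> 0 <= F i) -> 0 <= \big[Rmult/1]_(i <- r | P i) F i.
Proof. move=> H; apply: (big_ind (fun a => 0 <= a)) => //; [lra| move=> *; nra]. Qed.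

Lemma Rprod_gt0 (I : Type) (r : seq I) (P : pred I) (F : I -> R) :
  (forall i, P i -> 0 < F i) -> 0 < \big[Rmult/1]_(i <- r | P i) F i.
Proof. move=> H; apply: (big_ind (fun a => 0 < a)) => //; [lra| move=> *; nra]. Qed.

Lemma INR_sum (I : Type) (r : seq I) (P : pred I) (F : I -> nat) :
  INR (\sum_(i <- r | P i) F i) = \big[Rplus/0]_(i <- r | P i) INR (F i).
Proof. apply: (big_morph INR) => //; exact: plus_INR. Qed.

Lemma Rsum_const1 (T : finType) : \big[Rplus/0]_(i : T) 1 = INR #|T|.
Proof.
rewrite big_const cardE; elim: (size _) => [//|n IH].
rewrite S_INR -IH /=; lra.
Qed.

Lemma ln_prod (I : Type) (r : seq I) (F : I -> R) :
  (forall i, 0 < F i) -> ln (\big[Rmult/1]_(i <- r) F i) = \big[Rplus/0]_(i <- r) ln (F i).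
Proof.
move=> H; elim: r => [|a r IH]; first by rewrite !big_nil ln_1.
rewrite !big_cons ln_mult ?IH //; exact: Rprod_gt0.
Qed.

Lemma prod_div (I : Type) (r : seq I) (F G : I -> R) :
  (forall i, 0 < G i) ->
  \big[Rmult/1]_(i <- r) (F i / G i) = \big[Rmult/1]_(i <- r) F i / \big[Rmult/1]_(i <- r) G i.
Proof.
move=> H; elim: r => [|a r IH]; first by rewrite !big_nil; field.
rewrite !big_cons IH; have := @Rprod_gt0 _ r xpredT _ (fun i _ => H i); have := H a; move=> *; field; lra.
Qed.

Lemma INR_card_set (I : finType) (P : pred I) :
  INR #|[set i | P i]| = \big[Rplus/0]_(i : I) (if P i then 1 else 0).
Proof.
rewrite -sum1_card INR_sum big_mkcond /=; apply: eq_bigr => i _.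
by rewrite inE; case: (P i).
Qed.

Section Emp.
Variables (X Y : finType) (m : nat).
Implicit Types (xs : {ffun 'I_m -> X}) (ys : {ffun 'I_m -> Y}).

Definition Nc xs ys x y := #|[set i : 'I_m | (xs i == x) && (ys i == y)]|.
Definition Ny ys y := #|[set i : 'I_m | ys i == y]|.

Lemma sumN xs ys y : (\sum_(x : X) Nc xs ys x y)%N = Ny ys y.
Proof.
rewrite /Ny -sum1_card (partition_big xs predT) //=; apply: eq_bigr => x _.
rewrite /Nc -sum1_card; apply: eq_bigl => i; rewrite !inE andbC.
by case: (ys i == y); case: (xs i == x).
Qed.

Lemma sumPxy xs ys y : \big[Rplus/0]_(x : X) Pxy xs ys x y = Py ys y.
Proof.
rewrite /Py; have := sumN xs ys y; rewrite /Ny => <-; rewrite INR_sum /Rdiv big_distrl /=.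
by apply: eq_bigr.
Qed.

Lemma group_sum xs ys (g : X -> Y -> R) :
  \big[Rplus/0]_(i < m) g (xs i) (ys i) =
  \big[Rplus/0]_(x : X) \big[Rplus/0]_(y : Y) (INR (Nc xs ys x y) * g x y).
Proof.
have E: forall x y, INR (Nc xs ys x y) * g x y =
   \big[Rplus/0]_(i < m) (if (xs i == x) && (ys i == y) then g x y else 0).
  move=> x y; rewrite /Nc INR_card_set big_distrl /=; apply: eq_bigr => i _.
  case: ifP => _; lra.
under eq_bigr do under eq_bigr do rewrite E.
under eq_bigr do rewrite exchange_big /=.
rewrite exchange_big /=; apply: eq_bigr => i _.
rewrite (bigD1 (xs i)) //=.
rewrite [\big[Rplus/0]_(j | j != _) _]big1; last first.
  move=> x Hx; apply: big1 => y _.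
  by have -> : (xs i == x) = false by apply/negbTE; rewrite eq_sym.
rewrite (bigD1 (ys i)) //=.
rewrite [\big[Rplus/0]_(j | j != _) _]big1; last first.
  move=> y Hy.
  have -> : (ys i == y) = false by apply/negbTE; rewrite eq_sym.
  by rewrite andbF.
by rewrite !eqxx /=; lra.
Qed.


Lemma Rdiv_ge0 a b : 0 <= a -> 0 <= b -> 0 <= a / b.
Proof.
move=> Ha Hb; rewrite /Rdiv; apply: Rmult_le_pos => //.
case: (Req_dec b 0) => [->|nb]; first by rewrite Rinv_0; lra.
left; apply: Rinv_0_lt_compat; lra.
Qed.

Lemma Pxy_ge0 xs ys x y : 0 <= Pxy xs ys x y.
Proof. apply: Rdiv_ge0; exact: pos_INR. Qed.

Lemma Pxgy_ge0 xs ys x y : 0 <= Px_given_y xs ys x y.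
Proof. apply: Rdiv_ge0; [exact: Pxy_ge0 | apply: Rdiv_ge0; exact: pos_INR]. Qed.

Hypothesis Hm : (0 < m)%nat.

Lemma Py_pos ys i : 0 < Py ys (ys i).
Proof.
rewrite /Py /Rdiv; apply: Rmult_lt_0_compat; last by apply: Rinv_0_lt_compat; apply: lt_0_INR; apply/ltP.
apply: lt_0_INR; apply/ltP; apply/card_gt0P; exists i; by rewrite inE.
Qed.

Lemma Pxy_pos xs ys i : 0 < Pxy xs ys (xs i) (ys i).
Proof.
rewrite /Pxy /Rdiv; apply: Rmult_lt_0_compat; last by apply: Rinv_0_lt_compat; apply: lt_0_INR; apply/ltP.
apply: lt_0_INR; apply/ltP; apply/card_gt0P; exists i; by rewrite inE !eqxx.
Qed.

Lemma Pxgy_pos xs ys i : 0 < Px_given_y xs ys (xs i) (ys i).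
Proof.
rewrite /Px_given_y /Rdiv; apply: Rmult_lt_0_compat; first exact: Pxy_pos.
apply: Rinv_0_lt_compat; exact: Py_pos.
Qed.

End Emp.


Lemma part1 (X Y : finType) (m : nat) (Q : X -> R)
  (Hm : (0 < m)%nat) (HQpos : forall x, 0 < Q x)
  (xs : {ffun 'I_m -> X}) (ys : {ffun 'I_m -> Y}) :
     falseMI Q (fun y x => Pxy xs ys x y / Q x)
     = / INR m * log2 (phat xs ys / Qprod Q xs).
Proof.
have Hm' : 0 < INR m by apply: lt_0_INR; apply/ltP.
rewrite /phat /Qprod -prod_div // /log2 ln_prod; last first.
  move=> i; apply: Rdiv_lt_0_compat; [exact: Pxgy_pos | exact: HQpos].
rewrite /Rdiv big_distrl /=.
rewrite (group_sum xs ys (fun x y => ln (Px_given_y xs ys x y * / Q x) * / ln 2)).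
rewrite big_distrr /=; apply: eq_bigr => x _.
rewrite big_distrr /=; apply: eq_bigr => y _ /=.
have E1 : forall x', Q x' * (Pxy xs ys x' y * / Q x') = Pxy xs ys x' y.
  move=> x'; have := HQpos x'; move=> ?; field; lra.
rewrite E1.
case: (Req_EM_T (Pxy xs ys x y) 0) => [e|ne].
  have : INR (Nc xs ys x y) = 0.
    move: e; rewrite /Pxy /Rdiv => e.
    have := Rmult_integral _ _ e; case => // h; exfalso.
    have := Rinv_0_lt_compat _ Hm'; lra.
  move=> H0 /=; rewrite H0; lra.
rewrite /=.
under eq_bigr do rewrite E1.
rewrite sumPxy /log2 /Rdiv.
have -> : Pxy xs ys x y * / Q x * / Py ys y = Px_given_y xs ys x y * / Q x.
  by rewrite /Px_given_y /Rdiv; ring.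
rewrite /Pxy /Rdiv /Nc; ring.
Qed.

Section Key.
Variables (X Y : finType) (m : nat).
Hypothesis Hm : (0 < m)%nat.

Lemma Nc_le xs ys x y : leq (@Nc X Y m xs ys x y) m.
Proof. by rewrite /Nc; have := max_card [set i : 'I_m | (xs i == x) && (ys i == y)]; rewrite card_ord. Qed.

Lemma sum_class (ys : {ffun 'I_m -> Y}) (r : {ffun 'I_m -> X}) (P : pred {ffun 'I_m -> X}) :
  (forall xs, P xs -> phat xs ys = \big[Rmult/1]_(i < m) Px_given_y r ys (xs i) (ys i)) ->
  \big[Rplus/0]_(xs | P xs) phat xs ys <= 1.
Proof.
move=> Hc.
apply: (Rle_trans _ (\big[Rplus/0]_(xs : {ffun 'I_m -> X}) \big[Rmult/1]_(i < m) Px_given_y r ys (xs i) (ys i))).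
  rewrite big_mkcond /=; apply: Rsum_le => xs _.
  case: ifP => HP; first by rewrite Hc //; apply: Rle_refl.
  by apply: Rprod_ge0 => i _; apply: Pxgy_ge0.
rewrite -(bigA_distr_bigA (fun i x => Px_given_y r ys x (ys i))) /=.
rewrite big1; first lra.
move=> i _; rewrite /Px_given_y /Rdiv -big_distrl /= sumPxy.
apply: Rinv_r; have := Py_pos Hm ys i; lra.
Qed.

Lemma key (ys : {ffun 'I_m -> Y}) :
  \big[Rplus/0]_(xs : {ffun 'I_m -> X}) phat xs ys <= INR (expn m.+1 (muln (subn #|X| 1) #|Y|)).
Proof.
case: (pickP (fun _ : {ffun 'I_m -> X} => true)) => [xs0 _|none]; last first.
  rewrite big1 => [|xs _]; [exact: pos_INR | by have := none xs].
pose x0 := xs0 (Ordinal Hm).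
pose D := ({x : X | x != x0} * Y)%type.
pose f (xs : {ffun 'I_m -> X}) : {ffun D -> 'I_m.+1} :=
  [ffun p : D => inord (Nc xs ys (val p.1) p.2)].
have feq : forall xs xs', f xs = f xs' -> forall x y, Nc xs ys x y = Nc xs' ys x y.
  move=> xs xs' E.
  have E1 : forall x y, x != x0 -> Nc xs ys x y = Nc xs' ys x y.
    move=> x y Hx.
    have := congr1 (fun g : {ffun D -> 'I_m.+1} => nat_of_ord (g ((exist (fun z => z != x0) x Hx, y) : D))) E.
    by rewrite /f !ffunE /= !inordK // ltnS Nc_le.
  move=> x y; case: (eqVneq x x0) => [->|Hx]; last exact: E1.
  have S1 := sumN xs ys y; have S2 := sumN xs' ys y.
  rewrite (bigD1 x0) //= in S1; rewrite (bigD1 x0) //= in S2.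
  have : (\sum_(x | x != x0) Nc xs ys x y = \sum_(x | x != x0) Nc xs' ys x y)%N.
    by apply: eq_bigr => z Hz; apply: E1.
  move=> E2; rewrite E2 in S1; rewrite -S2 in S1.
  by move/eqP: S1; rewrite eqn_add2r => /eqP.
have PxyN : forall xs x y, Pxy xs ys x y = INR (Nc xs ys x y) / INR m by [].
have Peq : forall xs xs', f xs = f xs' ->
    phat xs ys = \big[Rmult/1]_(i < m) Px_given_y xs' ys (xs i) (ys i).
  move=> xs xs' E; rewrite /phat; apply: eq_bigr => i _.
  by rewrite /Px_given_y !PxyN (feq xs xs').
rewrite (partition_big f xpredT) //=.
apply: (Rle_trans _ (\big[Rplus/0]_(c : {ffun D -> 'I_m.+1}) 1)).
  apply: Rsum_le => c _.
  case: (pickP (fun xs => f xs == c)) => [r Hr|none].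
    apply: (sum_class (r:=r)) => xs /= Hxs; apply: Peq.
    by move/eqP: Hxs ->; move/eqP: Hr ->.
  rewrite big_pred0 => [|xs]; [lra | by rewrite /= none].
rewrite Rsum_const1 card_ffun card_prod card_sig card_ord cardC1 subn1.
by apply: Rle_refl.
Qed.
End Key.

Lemma INR_expn a b : INR (expn a b) = INR a ^ b.
Proof. elim: b => [|b IH]; first by rewrite expn0. by rewrite expnS mult_INR IH. Qed.

Lemma part2 (X Y : finType) (m : nat) (Q : X -> R)
  (Hm : (0 < m)%nat)
  (HQpos : forall x, 0 < Q x) (T : R) (ys : {ffun 'I_m -> Y}) :
     let k0 := INR ((#|X| - 1) * #|Y|)%nat in
     let k1 := INR ((#|X| - 1) * #|Y|)%nat in
     PrQ Q (fun xs => Rpower 2 (INR m * T) <= phat xs ys / Qprod Q xs)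
           (fun xs => Rle_dec (Rpower 2 (INR m * T)) (phat xs ys / Qprod Q xs))
     <= Rpower 2 (- (INR m * T - k0 * log2 (INR m) - k1)).
Proof.
move=> k0 k1.
have Hm' : 0 < INR m by apply: lt_0_INR; apply/ltP.
set K := ((#|X| - 1) * #|Y|)%nat.
have HK : K = muln (subn #|X| 1) #|Y| by [].
set A := Rpower 2 (INR m * T).
set B := Rpower 2 (- (INR m * T)).
have HAB : A * B = 1 by rewrite /A /B -Rpower_plus Rplus_opp_r Rpower_O //; lra.
have HB : 0 < B by rewrite /B /Rpower; apply: exp_pos.
have S1 : PrQ Q (fun xs => A <= phat xs ys / Qprod Q xs)
           (fun xs => Rle_dec A (phat xs ys / Qprod Q xs))
     <= B * \big[Rplus/0]_(xs : {ffun 'I_m -> X}) phat xs ys.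
  rewrite /PrQ big_distrr /=; apply: Rsum_le => xs _.
  have Hq : 0 < Qprod Q xs by apply: Rprod_gt0.
  have Hp : 0 <= phat xs ys by apply: Rprod_ge0 => i _; apply: Pxgy_ge0.
  case: Rle_dec => H.
    have H2 : A * Qprod Q xs <= phat xs ys.
      have := Rmult_le_compat_r (Qprod Q xs) _ _ (Rlt_le _ _ Hq) H.
      rewrite /Rdiv Rmult_assoc Rinv_l; [rewrite Rmult_1_r; lra | lra].
    have H3 := Rmult_le_compat_l B _ _ (Rlt_le _ _ HB) H2.
    have E : B * (A * Qprod Q xs) = Qprod Q xs.
      by rewrite -Rmult_assoc (Rmult_comm B A) HAB Rmult_1_l.
    rewrite /=; lra.
  rewrite /=; apply: Rmult_le_pos; lra.
apply: (Rle_trans _ _ _ S1).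
have S2 := @key X Y m Hm ys; rewrite -HK INR_expn in S2.
have S3 : INR m.+1 ^ K <= 2 ^ K * INR m ^ K.
  rewrite -Rpow_mult_distr; apply: pow_incr; rewrite S_INR.
  have Hm1 : 1 <= INR m by apply: (le_INR 1); apply/leP.
  split; [have := pos_INR m; lra | lra].
have ln2 : 0 < ln 2 by rewrite -ln_1; apply: ln_increasing; lra.
have -> : Rpower 2 (- (INR m * T - k0 * log2 (INR m) - k1))
   = B * (INR m ^ K * 2 ^ K).
  rewrite (_ : - (INR m * T - k0 * log2 (INR m) - k1) = - (INR m * T) + (k0 * log2 (INR m) + k1)); last by ring.
  rewrite Rpower_plus Rpower_plus /k1 Rpower_pow; last lra.
  congr (_ * (_ * _)).
  rewrite /Rpower /log2 /k0 (_ : INR K * (ln (INR m) / ln 2) * ln 2 = INR K * ln (INR m)); last by field; lra.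
  by rewrite -/(Rpower (INR m) (INR K)) Rpower_pow.
have : B * \big[Rplus/0]_(xs : {ffun 'I_m -> X}) phat xs ys <= B * INR m.+1 ^ K.
  by apply: Rmult_le_compat_l; lra.
have : B * INR m.+1 ^ K <= B * (2 ^ K * INR m ^ K) by apply: Rmult_le_compat_l; lra.
move=> *; nra.
Qed.

Unset Implicit Arguments.

Theorem lemma7 (X Y : finType) (m : nat) (Q : X -> R)
  (Hm : (0 < m)%nat)
  (HQpos : forall x, 0 < Q x)
  (HQsum : \big[Rplus/0]_(x : X) Q x = 1) :
  (forall (xs : {ffun 'I_m -> X}) (ys : {ffun 'I_m -> Y}),
     falseMI Q (fun y x => Pxy xs ys x y / Q x)
     = / INR m * log2 (phat xs ys / Qprod Q xs))
  /\
  (forall (T : R) (ys : {ffun 'I_m -> Y}),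
     let k0 := INR ((#|X| - 1) * #|Y|)%nat in
     let k1 := INR ((#|X| - 1) * #|Y|)%nat in
     PrQ Q (fun xs => Rpower 2 (INR m * T) <= phat xs ys / Qprod Q xs)
           (fun xs => Rle_dec (Rpower 2 (INR m * T)) (phat xs ys / Qprod Q xs))
     <= Rpower 2 (- (INR m * T - k0 * log2 (INR m) - k1))).
Proof.
split.
- move=> xs ys; exact: part1.
- move=> T ys; exact: part2.
Qed.
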